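(* For the modified EnvZ/OmpR network described in the context, with rate constants $k_1,\dots,k_{16}$ treated as symbols: (i) there are no nonzero type 1 complex-linear invariants on $\{C_7,C_8,C_{11},C_{14}\}$; (ii) for each $i\in\{1,2,3\}$ the space of type 1 complex-linear invariants on $\{C_i,C_7,C_8,C_{11},C_{14}\}$ has dimension $1$, spanned respectively by \[k_{16}x^{C_{14}}-\frac{k_1k_3k_5}{k_2(k_4+k_5)}x^{C_1}+\frac{k_{10}k_{12}}{k_{11}+k_{12}}x^{C_8}+\frac{k_{13}k_{15}}{k_{14}+k_{15}}x^{C_{11}},\] \[k_{16}x^{C_{14}}-\frac{k_3k_5}{k_4+k_5}x^{C_2}+\frac{k_{10}k_{12}}{k_{11}+k_{12}}x^{C_8}+\frac{k_{13}k_{15}}{k_{14}+k_{15}}x^{C_{11}},\] \[k_{16}x^{C_{14}}-k_5x^{C_3}+\frac{k_{10}k_{12}}{k_{11}+k_{12}}x^{C_8}+\frac{k_{13}k_{15}}{k_{14}+k_{15}}x^{C_{11}};\] in particular each of these expressions vanishes at every steady state for all positive values of the rate constants.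
   Context: The modified EnvZ/OmpR network has mass-action kinetics and reactions $\mathrm{EnvZ\text{-}ADP}\underset{k_2}{\overset{k_1}{\rightleftharpoons}}\mathrm{EnvZ}\underset{k_4}{\overset{k_3}{\rightleftharpoons}}\mathrm{EnvZ\text{-}ATP}\xrightarrow{k_5}\mathrm{EnvZ\text{-}P}$; $\mathrm{EnvZ\text{-}P}+\mathrm{OmpR}\underset{k_7}{\overset{k_6}{\rightleftharpoons}}\mathrm{EnvZ\text{-}P\text{-}OmpR}\underset{k_9}{\overset{k_8}{\rightleftharpoons}}\mathrm{EnvZ}+\mathrm{OmpR\text{-}P}$; $\mathrm{EnvZ\text{-}ATP}+\mathrm{OmpR\text{-}P}\underset{k_{11}}{\overset{k_{10}}{\rightleftharpoons}}\mathrm{EnvZ\text{-}ATP\text{-}OmpR\text{-}P}\xrightarrow{k_{12}}\mathrm{EnvZ\text{-}ATP}+\mathrm{OmpR}$; $\mathrm{EnvZ\text{-}ADP}+\mathrm{OmpR\text{-}P}\underset{k_{14}}{\overset{k_{13}}{\rightleftharpoons}}\mathrm{EnvZ\text{-}ADP\text{-}OmpR\text{-}P}\xrightarrow{k_{15}}\mathrm{EnvZ\text{-}ADP}+\mathrm{OmpR}$; $\mathrm{OmpR\text{-}P}\xrightarrow{k_{16}}\mathrm{OmpR}$ (here $A\underset{k'}{\overset{k}{\rightleftharpoons}}B$ means $A\xrightarrow{k}B$ and $B\xrightarrow{k'}A$; hyphenated names are single species). Complexes are numbered $C_1=\mathrm{EnvZ\text{-}ADP}$, $C_2=\mathrm{EnvZ}$,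 $C_3=\mathrm{EnvZ\text{-}ATP}$, $C_4=\mathrm{EnvZ\text{-}P}$, $C_5=\mathrm{EnvZ\text{-}P}+\mathrm{OmpR}$, $C_6=\mathrm{EnvZ\text{-}P\text{-}OmpR}$, $C_7=\mathrm{EnvZ}+\mathrm{OmpR\text{-}P}$, $C_8=\mathrm{EnvZ\text{-}ATP}+\mathrm{OmpR\text{-}P}$, $C_9=\mathrm{EnvZ\text{-}ATP\text{-}OmpR\text{-}P}$, $C_{10}=\mathrm{EnvZ\text{-}ATP}+\mathrm{OmpR}$, $C_{11}=\mathrm{EnvZ\text{-}ADP}+\mathrm{OmpR\text{-}P}$, $C_{12}=\mathrm{EnvZ\text{-}ADP\text{-}OmpR\text{-}P}$, $C_{13}=\mathrm{EnvZ\text{-}ADP}+\mathrm{OmpR}$, $C_{14}=\mathrm{OmpR\text{-}P}$, $C_{15}=\mathrm{OmpR}$. For concentrations $x$, $x^{C}=\prod_jx_j^{C(S_j)}$, $\Psi(x)=(x^{C_1},\dots,x^{C_{15}})^\top$, and the dynamics are $dx/dt=M\Psi(x)$ with $M=Y\mathcal{L}(G)$ ($Y$ has the complexes as columns; $\mathcal{L}(G)_{ji}=\kappa_{ij}$ for an edge $C_i\to C_j$ with rate constant $\kappa_{ij}$, $\mathcal{L}(G)_{ii}=-\sum_j\kappa_{ij}$, other entries $0$). A type 1 complex-linear invariant on selected complexes $C_{i_1},\dots,C_{i_k}$ is a polynomial $\sum_ra_rx^{C_{i_r}}$ such that the vector with entry $a_r$ at position $i_r$ and $0$ elsewhere lies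 in the row span of $M$. *)

(* Defs.v *)
From HB Require Import structures.
From mathcomp Require Import all_boot all_order all_algebra.
Set Implicit Arguments. Unset Strict Implicit. Unset Printing Implicit Defensive.
Import Order.TTheory GRing.Theory Num.Theory.
Local Open Scope ring_scope.

(* All indices below are 1-BASED as in the paper.
   Species: S1 = EnvZ-ADP, S2 = EnvZ, S3 = EnvZ-ATP, S4 = EnvZ-P, S5 = OmpR,
            S6 = EnvZ-P-OmpR, S7 = OmpR-P, S8 = EnvZ-ATP-OmpR-P,
            S9 = EnvZ-ADP-OmpR-P.
   Complexes C1..C15 as in the paper.  A Rocq index i : 'I_15 stands for
   complex C_(i+1), and s : 'I_9 stands for species S_(s+1). *)

Definition stoich (c s : nat) : nat :=
  match c, s with
  | 1, 1 => 1
  | 2, 2 => 1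
  | 3, 3 => 1
  | 4, 4 => 1
  | 5, 4 => 1 | 5, 5 => 1
  | 6, 6 => 1
  | 7, 2 => 1 | 7, 7 => 1
  | 8, 3 => 1 | 8, 7 => 1
  | 9, 8 => 1
  | 10, 3 => 1 | 10, 5 => 1
  | 11, 1 => 1 | 11, 7 => 1
  | 12, 9 => 1
  | 13, 1 => 1 | 13, 5 => 1
  | 14, 7 => 1
  | 15, 5 => 1
  | _, _ => 0
  end.

(* Reactions as (source complex, target complex, index of rate constant). *)
Definition edges : seq (nat * nat * nat) :=
  [:: (1, 2, 1); (2, 1, 2); (2, 3, 3); (3, 2, 4); (3, 4, 5);
      (5, 6, 6); (6, 5, 7); (6, 7, 8); (7, 6, 9);
      (8, 9, 10); (9, 8, 11); (9, 10, 12);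
      (11, 12, 13); (12, 11, 14); (12, 13, 15);
      (14, 15, 16)].

Section Net.
Variable R : realFieldType.

Definition Ymx : 'M[R]_(9, 15) := \matrix_(s < 9, c < 15) (stoich c.+1 s.+1)%:R.

Definition Lap (k : nat -> R) : 'M[R]_15 :=
  \matrix_(j < 15, i < 15)
    if j == i then - \sum_(e <- edges | e.1.1 == i.+1) k e.2
    else \sum_(e <- edges | (e.1.1 == i.+1) && (e.1.2 == j.+1)) k e.2.

(* M = Y L(G); dynamics dx/dt = M Psi(x). *)
Definition Mnet (k : nat -> R) : 'M[R]_(9, 15) := Ymx *m Lap k.

Definition Psi (x : 'I_9 -> R) : 'cV[R]_15 :=
  \col_(c < 15) \prod_(s < 9) x s ^+ stoich c.+1 s.+1.

(* A polynomial sum_r a_r x^{C_{i_r}} is represented by its coefficient row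
   vector a (entry a_r at position i_r). *)
Definition type1_invariant (k : nat -> R) (S : seq nat) (a : 'rV[R]_15) : Prop :=
  (forall i : 'I_15, i.+1 \notin S -> a 0 i = 0) /\ (a <= Mnet k)%MS.

Definition polyvec (l : seq (nat * R)) : 'rV[R]_15 :=
  \row_(i < 15) \sum_(p <- l | p.1 == i.+1) p.2.

Definition steady_state (k : nat -> R) (x : 'I_9 -> R) : Prop :=
  Mnet k *m Psi x = 0.

Definition spanned_by (k : nat -> R) (S : seq nat) (w : 'rV[R]_15) : Prop :=
  [/\ w != 0,
      (forall a, type1_invariant k S a <-> exists c : R, a = c *: w)
    & (forall x, steady_state k x -> w *m Psi x = 0)].

End Net.

(* Main.v *)
Require Import Defs.
From HB Require Import structures.
From mathcomp Require Import all_boot all_order all_algebra.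
From mathcomp Require Import ring lra.
Import Order.TTheory GRing.Theory Num.Theory.
Set Implicit Arguments. Unset Strict Implicit.
Local Open Scope ring_scope.

Section S.
Variable R : realFieldType.
Variable k : nat -> R.

Definition uform (g : nat -> R) (n : nat) : R :=
  match n with
  | 0 => g 0 | 1 => g 1 | 2 => g 2 | 3 => g 3 | 4 => g 3 + g 4 | 5 => g 5
  | 6 => g 1 + g 6 | 7 => g 2 + g 6 | 8 => g 7 | 9 => g 2 + g 4
  | 10 => g 0 + g 6 | 11 => g 8 | 12 => g 0 + g 4 | 13 => g 6 | _ => g 4 end.

Lemma uE (g : nat -> R) : (\row_(j < 9) g j) *m Ymx R = \row_(i < 15) uform g i.
Proof.
apply/rowP => i; rewrite !mxE !big_ord_recl big_ord0 !mxE /=.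
case: i => [[|[|[|[|[|[|[|[|[|[|[|[|[|[|[|n]]]]]]]]]]]]]]]] Hi /=; rewrite ?mulr0 ?mulr1 ?add0r ?addr0 //. 
Qed.

Definition lform (h : nat -> R) (n : nat) : R :=
  match n with
  | 0 => k 1 * (h 1 - h 0)
  | 1 => k 2 * (h 0 - h 1) + k 3 * (h 2 - h 1)
  | 2 => k 4 * (h 1 - h 2) + k 5 * (h 3 - h 2)
  | 4 => k 6 * (h 5 - h 4)
  | 5 => k 7 * (h 4 - h 5) + k 8 * (h 6 - h 5)
  | 6 => k 9 * (h 5 - h 6)
  | 7 => k 10 * (h 8 - h 7)
  | 8 => k 11 * (h 7 - h 8) + k 12 * (h 9 - h 8)
  | 10 => k 13 * (h 11 - h 10)
  | 11 => k 14 * (h 10 - h 11) + k 15 * (h 12 - h 11)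
  | 13 => k 16 * (h 14 - h 13)
  | _ => 0 end.

Lemma bump0' n : bump 0 n = n.+1. Proof. by []. Qed.
Lemma lE (h : nat -> R) : (\row_(j < 15) h j) *m Lap k = \row_(i < 15) lform h i.
Proof.
apply/rowP => i; rewrite !mxE !big_ord_recl big_ord0 !mxE.
case: i => [[|[|[|[|[|[|[|[|[|[|[|[|[|[|[|n]]]]]]]]]]]]]]]] Hi //=;
  rewrite !bump0' unlock /=; ring.
Qed.

Lemma rowv (v : 'rV[R]_9) : v = \row_(j < 9) (fun n => v 0 (inord n)) j.
Proof. by apply/rowP => j; rewrite mxE inord_val. Qed.

Lemma vME (g : nat -> R) : (\row_(j < 9) g j) *m Mnet k = \row_(i < 15) lform (uform g) i.
Proof. by rewrite /Mnet mulmxA uE lE. Qed.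

Lemma vME' (v : 'rV[R]_9) : v *m Mnet k = \row_(i < 15) lform (uform (fun n => v 0 (inord n))) i.
Proof. by have := vME (fun n => v 0 (inord n)); rewrite -rowv. Qed.

Hypothesis hk : forall r : nat, (1 <= r <= 16)%N -> 0 < k r.
Lemma kn0 r : (1 <= r <= 16)%N -> k r != 0.
Proof. by move=> h; rewrite gt_eqF // hk. Qed.

Lemma key1 (g : nat -> R)
  (H1 : lform (uform g) 1 = 0) (H2 : lform (uform g) 2 = 0)
  (H4 : lform (uform g) 4 = 0) (H5 : lform (uform g) 5 = 0)
  (H8 : lform (uform g) 8 = 0) (H11 : lform (uform g) 11 = 0) :
  \row_(i < 15) lform (uform g) i = (g 4%N - g 6%N) *:
       (polyvec [:: (14%N, k 16%N);
                    (1%N, - (k 1%N * k 3%N * k 5%N / (k 2%N * (k 4%N + k 5%N))));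
                    (8%N, k 10%N * k 12%N / (k 11%N + k 12%N));
                    (11%N, k 13%N * k 15%N / (k 14%N + k 15%N))]).
Proof.
rewrite /= in H1 H2 H4 H5 H8 H11.
have k1 := hk (r:=1) isT; have k2 := hk (r:=2) isT; have k3 := hk (r:=3) isT; have k4 := hk (r:=4) isT.
have k5 := hk (r:=5) isT; have k6 := hk (r:=6) isT; have k7 := hk (r:=7) isT; have k8 := hk (r:=8) isT.
have k11 := hk (r:=11) isT; have k12 := hk (r:=12) isT; have k14 := hk (r:=14) isT; have k15 := hk (r:=15) isT.
have k16 := hk (r:=16) isT.
have n2 : k 2 != 0 by rewrite gt_eqF.
have n45 : k 4 + k 5 != 0 by rewrite gt_eqF // addr_gt0.
have n1112 : k 11 + k 12 != 0 by rewrite gt_eqF // addr_gt0.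
have n1415 : k 14 + k 15 != 0 by rewrite gt_eqF // addr_gt0.
have e5 : g 5 = g 3 + g 4.
  by move/eqP: H4; rewrite mulf_eq0 gt_eqF //= subr_eq0 => /eqP.
rewrite e5 subrr mulr0 add0r in H5.
have e3 : g 3 = g 1 + g 6 - g 4.
  move/eqP: H5; rewrite mulf_eq0 gt_eqF //= subr_eq0 => /eqP ->; ring.
have e2 : g 2 = (k 4 * g 1 + k 5 * g 3) / (k 4 + k 5).
  apply/(mulIf n45); rewrite divfK //; lra.
have e0 : g 0 = g 1 + k 3 * (g 1 - g 2) / k 2.
  apply/(mulIf n2); rewrite mulrDl divfK //; lra.
have e7 : g 7 = (k 11 * (g 2 + g 6) + k 12 * (g 2 + g 4)) / (k 11 + k 12).
  apply/(mulIf n1112); rewrite divfK //; lra.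
have e8 : g 8 = (k 14 * (g 0 + g 6) + k 15 * (g 0 + g 4)) / (k 14 + k 15).
  apply/(mulIf n1415); rewrite divfK //; lra.
apply/rowP => i; rewrite !mxE.
case: i => [[|[|[|[|[|[|[|[|[|[|[|[|[|[|[|n]]]]]]]]]]]]]]]] Hi //=; rewrite unlock /=;
  rewrite ?mulr0 //.
all: rewrite ?e8 ?e7 ?e0 ?e2 ?e5 ?e3; field; by rewrite ?n2 ?n45 ?n1112 ?n1415.
Qed.

Lemma key2 (g : nat -> R)
  (H0 : lform (uform g) 0 = 0) (H2 : lform (uform g) 2 = 0)
  (H4 : lform (uform g) 4 = 0) (H5 : lform (uform g) 5 = 0)
  (H8 : lform (uform g) 8 = 0) (H11 : lform (uform g) 11 = 0) :
  \row_(i < 15) lform (uform g) i = (g 4%N - g 6%N) *: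
       (polyvec [:: (14%N, k 16%N);
                    (2%N, - (k 3%N * k 5%N / (k 4%N + k 5%N)));
                    (8%N, k 10%N * k 12%N / (k 11%N + k 12%N));
                    (11%N, k 13%N * k 15%N / (k 14%N + k 15%N))]).
Proof.
rewrite /= in H0 H2 H4 H5 H8 H11.
have k1 := hk (r:=1) isT; have k2 := hk (r:=2) isT; have k3 := hk (r:=3) isT; have k4 := hk (r:=4) isT.
have k5 := hk (r:=5) isT; have k6 := hk (r:=6) isT; have k7 := hk (r:=7) isT; have k8 := hk (r:=8) isT.
have k11 := hk (r:=11) isT; have k12 := hk (r:=12) isT; have k14 := hk (r:=14) isT; have k15 := hk (r:=15) isT.
have k16 := hk (r:=16) isT.
have n2 : k 2 != 0 by rewrite gt_eqF.
have n45 : k 4 + k 5 != 0 by rewrite gt_eqF // addr_gt0.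
have n1112 : k 11 + k 12 != 0 by rewrite gt_eqF // addr_gt0.
have n1415 : k 14 + k 15 != 0 by rewrite gt_eqF // addr_gt0.
have e5 : g 5 = g 3 + g 4.
  by move/eqP: H4; rewrite mulf_eq0 gt_eqF //= subr_eq0 => /eqP.
rewrite e5 subrr mulr0 add0r in H5.
have e3 : g 3 = g 1 + g 6 - g 4.
  move/eqP: H5; rewrite mulf_eq0 gt_eqF //= subr_eq0 => /eqP ->; ring.
have k1n : k 1 != 0 by rewrite gt_eqF.
have e0 : g 0 = g 1.
  by move/eqP: H0; rewrite mulf_eq0 (negbTE k1n) /= subr_eq0 => /eqP.
have e2 : g 2 = (k 4 * g 1 + k 5 * g 3) / (k 4 + k 5).
  apply/(mulIf n45); rewrite divfK //; lra.
have e7 : g 7 = (k 11 * (g 2 + g 6) + k 12 * (g 2 + g 4)) / (k 11 + k 12).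
  apply/(mulIf n1112); rewrite divfK //; lra.
have e8 : g 8 = (k 14 * (g 0 + g 6) + k 15 * (g 0 + g 4)) / (k 14 + k 15).
  apply/(mulIf n1415); rewrite divfK //; lra.
apply/rowP => i; rewrite !mxE.
case: i => [[|[|[|[|[|[|[|[|[|[|[|[|[|[|[|n]]]]]]]]]]]]]]]] Hi //=; rewrite unlock /=;
  rewrite ?mulr0 //.
all: rewrite ?e8 ?e7 ?e0 ?e2 ?e5 ?e3; field; by rewrite ?n2 ?n45 ?n1112 ?n1415.
Qed.

Lemma key3 (g : nat -> R)
  (H0 : lform (uform g) 0 = 0) (H1 : lform (uform g) 1 = 0)
  (H4 : lform (uform g) 4 = 0) (H5 : lform (uform g) 5 = 0)
  (H8 : lform (uform g) 8 = 0) (H11 : lform (uform g) 11 = 0) :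
  \row_(i < 15) lform (uform g) i = (g 4%N - g 6%N) *:
       (polyvec [:: (14%N, k 16%N);
                    (3%N, - k 5%N);
                    (8%N, k 10%N * k 12%N / (k 11%N + k 12%N));
                    (11%N, k 13%N * k 15%N / (k 14%N + k 15%N))]).
Proof.
rewrite /= in H0 H1 H4 H5 H8 H11.
have k1 := hk (r:=1) isT; have k2 := hk (r:=2) isT; have k3 := hk (r:=3) isT; have k4 := hk (r:=4) isT.
have k5 := hk (r:=5) isT; have k6 := hk (r:=6) isT; have k7 := hk (r:=7) isT; have k8 := hk (r:=8) isT.
have k11 := hk (r:=11) isT; have k12 := hk (r:=12) isT; have k14 := hk (r:=14) isT; have k15 := hk (r:=15) isT.
have k16 := hk (r:=16) isT.
have n2 : k 2 != 0 by rewrite gt_eqF.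
have n45 : k 4 + k 5 != 0 by rewrite gt_eqF // addr_gt0.
have n1112 : k 11 + k 12 != 0 by rewrite gt_eqF // addr_gt0.
have n1415 : k 14 + k 15 != 0 by rewrite gt_eqF // addr_gt0.
have e5 : g 5 = g 3 + g 4.
  by move/eqP: H4; rewrite mulf_eq0 gt_eqF //= subr_eq0 => /eqP.
rewrite e5 subrr mulr0 add0r in H5.
have e3 : g 3 = g 1 + g 6 - g 4.
  move/eqP: H5; rewrite mulf_eq0 gt_eqF //= subr_eq0 => /eqP ->; ring.
have k1n : k 1 != 0 by rewrite gt_eqF.
have e0 : g 0 = g 1.
  by move/eqP: H0; rewrite mulf_eq0 (negbTE k1n) /= subr_eq0 => /eqP.
rewrite e0 subrr mulr0 add0r in H1.
have e2 : g 2 = g 1.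
  by move/eqP: H1; rewrite mulf_eq0 gt_eqF //= subr_eq0 => /eqP.
have e7 : g 7 = (k 11 * (g 2 + g 6) + k 12 * (g 2 + g 4)) / (k 11 + k 12).
  apply/(mulIf n1112); rewrite divfK //; lra.
have e8 : g 8 = (k 14 * (g 0 + g 6) + k 15 * (g 0 + g 4)) / (k 14 + k 15).
  apply/(mulIf n1415); rewrite divfK //; lra.
apply/rowP => i; rewrite !mxE.
case: i => [[|[|[|[|[|[|[|[|[|[|[|[|[|[|[|n]]]]]]]]]]]]]]]] Hi //=; rewrite unlock /=;
  rewrite ?mulr0 //.
all: rewrite ?e8 ?e7 ?e0 ?e2 ?e5 ?e3; field; by rewrite ?n2 ?n45 ?n1112 ?n1415.
Qed.


Lemma spanned_gen (S : seq nat) (w : 'rV[R]_15) (g0 : nat -> R)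
  (Hkey : forall g, (forall i (hi : (i < 15)%N), i.+1 \notin S -> lform (uform g) i = 0) ->
       \row_(i < 15) lform (uform g) i = (g 4%N - g 6%N) *: w)
  (Hw : w = \row_(i < 15) lform (uform g0) i)
  (Hsupp : forall i : 'I_15, i.+1 \notin S -> w 0 i = 0)
  (Hnz : w != 0) : spanned_by k S w.
Proof.
split => //.
- move=> a; split.
  + case=> hS /submxP [v ev].
    pose g := fun n => v 0 (inord n).
    have ea : a = \row_(i < 15) lform (uform g) i by rewrite ev vME'.
    exists (g 4%N - g 6%N); rewrite ea; apply: Hkey => i hi hn.
    by have := hS (Ordinal hi) hn; rewrite ea mxE.
  + case=> c ->; split.
    * by move=> i hi; rewrite mxE Hsupp ?mulr0.
    * by apply: scalemx_sub; rewrite Hw -vME submxMl.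
- move=> x hx; rewrite Hw -vME -mulmxA.
  by move: hx; rewrite /steady_state => ->; rewrite mulmx0.
Qed.
End S.

Unset Implicit Arguments. Set Strict Implicit.

Theorem mainTheorem8 (R : realFieldType) (k : nat -> R)
    (hk : forall r : nat, (1 <= r <= 16)%N -> 0 < k r) :
  (forall a : 'rV[R]_15, type1_invariant k [:: 7; 8; 11; 14]%N a -> a = 0)
  /\ spanned_by k [:: 1; 7; 8; 11; 14]%N
       (polyvec [:: (14%N, k 16%N);
                    (1%N, - (k 1%N * k 3%N * k 5%N / (k 2%N * (k 4%N + k 5%N))));
                    (8%N, k 10%N * k 12%N / (k 11%N + k 12%N));
                    (11%N, k 13%N * k 15%N / (k 14%N + k 15%N))])
  /\ spanned_by k [:: 2; 7; 8; 11; 14]%N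
       (polyvec [:: (14%N, k 16%N);
                    (2%N, - (k 3%N * k 5%N / (k 4%N + k 5%N)));
                    (8%N, k 10%N * k 12%N / (k 11%N + k 12%N));
                    (11%N, k 13%N * k 15%N / (k 14%N + k 15%N))])
  /\ spanned_by k [:: 3; 7; 8; 11; 14]%N
       (polyvec [:: (14%N, k 16%N);
                    (3%N, - k 5%N);
                    (8%N, k 10%N * k 12%N / (k 11%N + k 12%N));
                    (11%N, k 13%N * k 15%N / (k 14%N + k 15%N))]).
Proof.
have k1 := hk 1 isT; have k2 := hk 2 isT; have k3 := hk 3 isT; have k4 := hk 4 isT.
have k5 := hk 5 isT; have k6 := hk 6 isT; have k7 := hk 7 isT; have k8 := hk 8 isT.
have k11 := hk 11 isT; have k12 := hk 12 isT; have k14 := hk 14 isT; have k15 := hk 15 isT.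
have k16 := hk 16 isT.
have n2 : k 2 != 0 by rewrite gt_eqF.
have n45 : k 4 + k 5 != 0 by rewrite gt_eqF // addr_gt0.
have n1112 : k 11 + k 12 != 0 by rewrite gt_eqF // addr_gt0.
have n1415 : k 14 + k 15 != 0 by rewrite gt_eqF // addr_gt0.
have nz : forall (w : 'rV[R]_15), w 0 (Ordinal (isT : (13 < 15)%N)) = k 16 -> w != 0.
  move=> w hw; apply/negP => /eqP w0; move: hw; rewrite w0 mxE => h.
  by move: k16; rewrite -h ltxx.
have key1' := key1 hk.
split.
  move=> a [hS /submxP [v ev]].
  pose g := fun n => v 0 (inord n).
  have ea : a = \row_(i < 15) lform k (uform g) i by rewrite ev vME'.
  have Z i (hi : (i < 15)%N) : i.+1 \notin [:: 7; 8; 11; 14]%N -> lform k (uform g) i = 0.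
    by move=> hn; have := hS (Ordinal hi) hn; rewrite ea mxE.
  rewrite ea (key1 hk (Z 1%N isT isT) (Z 2%N isT isT) (Z 4%N isT isT) (Z 5%N isT isT)
    (Z 8%N isT isT) (Z 11%N isT isT)).
  have := Z 0%N isT isT.
  move/eqP: (key1 hk (Z 1%N isT isT) (Z 2%N isT isT) (Z 4%N isT isT) (Z 5%N isT isT)
    (Z 8%N isT isT) (Z 11%N isT isT)) => /eqP /rowP /(_ ord0).
  rewrite !mxE unlock /= => -> /eqP.
  rewrite mulf_eq0 addr0 oppr_eq0 => /orP [/eqP -> | ]; first by rewrite scale0r.
  have P : 0 < k 1%N * k 3%N * k 5%N / (k 2%N * (k 4%N + k 5%N)).
    by rewrite divr_gt0 ?mulr_gt0 ?addr_gt0.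
  by rewrite (gt_eqF P).
split; last split.
- apply: (spanned_gen (g0 := fun n => match n with
      | 0 => 1 + k 3 * k 5 / (k 2 * (k 4 + k 5)) | 1 => 1 | 2 => k 4 / (k 4 + k 5)
      | 3 => 0 | 4 => 1 | 5 => 1 | 6 => 0
      | 7 => k 4 / (k 4 + k 5) + k 12 / (k 11 + k 12)
      | _ => 1 + k 3 * k 5 / (k 2 * (k 4 + k 5)) + k 15 / (k 14 + k 15) end)).
  + move=> g Z.
    exact: (key1 hk (Z 1%N isT isT) (Z 2%N isT isT) (Z 4%N isT isT) (Z 5%N isT isT)
    (Z 8%N isT isT) (Z 11%N isT isT)).
  + rewrite (key1 hk) /= ?subr0 ?scale1r //; field; by rewrite ?n2 ?n45 ?n1112 ?n1415.
  + move=> i; rewrite mxE.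
    case: i => [[|[|[|[|[|[|[|[|[|[|[|[|[|[|[|n]]]]]]]]]]]]]]]] Hi //=; rewrite unlock //.
  + by apply: nz; rewrite mxE unlock /= addr0.
- apply: (spanned_gen (g0 := fun n => match n with
      | 0 => 1 | 1 => 1 | 2 => k 4 / (k 4 + k 5)
      | 3 => 0 | 4 => 1 | 5 => 1 | 6 => 0
      | 7 => k 4 / (k 4 + k 5) + k 12 / (k 11 + k 12)
      | _ => 1 + k 15 / (k 14 + k 15) end)).
  + by move=> g Z; exact: (key2 hk (Z 0%N isT isT) (Z 2%N isT isT) (Z 4%N isT isT) (Z 5%N isT isT)
    (Z 8%N isT isT) (Z 11%N isT isT)).
  + rewrite (key2 hk) /= ?subr0 ?scale1r //; field; by rewrite ?n2 ?n45 ?n1112 ?n1415.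
  + move=> i; rewrite mxE.
    case: i => [[|[|[|[|[|[|[|[|[|[|[|[|[|[|[|n]]]]]]]]]]]]]]]] Hi //=; rewrite unlock //.
  + by apply: nz; rewrite mxE unlock /= addr0.
- apply: (spanned_gen (g0 := fun n => match n with
      | 0 => 1 | 1 => 1 | 2 => 1
      | 3 => 0 | 4 => 1 | 5 => 1 | 6 => 0
      | 7 => 1 + k 12 / (k 11 + k 12)
      | _ => 1 + k 15 / (k 14 + k 15) end)).
  + by move=> g Z; exact: (key3 hk (Z 0%N isT isT) (Z 1%N isT isT) (Z 4%N isT isT) (Z 5%N isT isT)
    (Z 8%N isT isT) (Z 11%N isT isT)).
  + rewrite (key3 hk) /= ?subr0 ?scale1r //; field; by rewrite ?n2 ?n45 ?n1112 ?n1415.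
  + move=> i; rewrite mxE.
    case: i => [[|[|[|[|[|[|[|[|[|[|[|[|[|[|[|n]]]]]]]]]]]]]]]] Hi //=; rewrite unlock //.
  + by apply: nz; rewrite mxE unlock /= addr0.
Qed.
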